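(* Let $g_1,\dots,g_N\in\mathbb{C}^K$ be nonzero vectors and $w_1,\dots,w_N\ge0$. Define for $\mathcal{S}\subseteq\mathcal{N}=\{1,\dots,N\}$ $$\mathrm{WFP}(\mathcal{S})=\sum_{i,j\in\mathcal{S}}w_iw_j\frac{|\langle g_i,g_j\rangle|^2}{\|g_i\|_2^2\|g_j\|_2^2},\qquad \mathrm{WFC}(\mathcal{T})=\mathrm{WFP}(\mathcal{N})-\mathrm{WFP}(\mathcal{N}\setminus\mathcal{T}).$$ Then $\mathrm{WFC}$ is normalized ($\mathrm{WFC}(\varnothing)=0$), monotone non-decreasing ($\mathcal{S}_1\subseteq\mathcal{S}_2\Rightarrow\mathrm{WFC}(\mathcal{S}_1)\le\mathrm{WFC}(\mathcal{S}_2)$), and submodular ($\mathrm{WFC}(\mathcal{S}_2\cup\{j\})-\mathrm{WFC}(\mathcal{S}_2)\le\mathrm{WFC}(\mathcal{S}_1\cup\{j\})-\mathrm{WFC}(\mathcal{S}_1)$ for all $\mathcal{S}_1\subseteq\mathcal{S}_2\subseteq\mathcal{N}$ and $j\in\mathcal{N}\setminus\mathcal{S}_2$).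
   Context: In the paper $g_i=\nabla_{\mathbf{x}}y_i$ is the gradient of the $i$-th measurement with respect to the unknown parameter vector (the $i$-th row of the measurement matrix in the linear case), and $w_i=\phi(\sigma_i)\in[0,1]$ is a weight depending on the noise level of sensor $i$. $\langle\cdot,\cdot\rangle$ is the standard inner product on $\mathbb{C}^K$. *)

(* Defs.v *)
From HB Require Import structures.
From mathcomp Require Import all_boot all_order all_algebra.
From mathcomp Require Import complex.
Set Implicit Arguments. Unset Strict Implicit. Unset Printing Implicit Defensive.
Import Order.TTheory GRing.Theory Num.Theory.
Local Open Scope ring_scope.

(* Vectors in C^K are modelled as functions 'I_K -> R[i], for R a real closed
   field (R[i] is then algebraically closed; R = reals gives C). *)

Section WFC.
Variables (R : rcfType) (K N : nat).

Definition cconj (z : R[i]) : R[i] := @Complex R (complex.Re z) (- complex.Im z).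

Definition cinner (u v : 'I_K -> R[i]) : R[i] := \sum_(k < K) u k * cconj (v k).

Definition cnorm2 (u : 'I_K -> R[i]) : R := \sum_(k < K) Normc.normc (u k) ^+ 2.

Variables (g : 'I_N -> 'I_K -> R[i]) (w : 'I_N -> R).

Definition WFP (S : {set 'I_N}) : R :=
  \sum_(i in S) \sum_(j in S)
     w i * w j * (Normc.normc (cinner (g i) (g j)) ^+ 2 / (cnorm2 (g i) * cnorm2 (g j))).

Definition WFC (T : {set 'I_N}) : R := WFP [set: 'I_N] - WFP (~: T).
End WFC.

(* Main.v *)
Require Import Defs.
From HB Require Import structures.
From mathcomp Require Import all_boot all_order all_algebra.
From mathcomp Require Import complex.
From mathcomp Require Import ring.
Set Implicit Arguments. Unset Strict Implicit.
Import Order.TTheory GRing.Theory Num.Theory.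
Local Open Scope ring_scope.

Section Help.
Variables (R : realDomainType) (N : nat).

Lemma sum_sub_le (F : 'I_N -> R) (A B : {set 'I_N}) :
  (forall i, 0 <= F i) -> A \subset B -> \sum_(i in A) F i <= \sum_(i in B) F i.
Proof.
move=> F0 AB; rewrite [leRHS](big_setID A) /= (setIidPr AB) lerDl.
by apply: sumr_ge0.
Qed.

Definition dsum (a : 'I_N -> 'I_N -> R) (A : {set 'I_N}) :=
  \sum_(i in A) \sum_(k in A) a i k.

Lemma dsum_mono a (A B : {set 'I_N}) : (forall i k, 0 <= a i k) -> A \subset B -> dsum a A <= dsum a B.
Proof.
move=> a0 AB; rewrite /dsum.
apply: (@le_trans _ _ (\sum_(i in A) \sum_(k in B) a i k)).
  by apply: ler_sum => i _; apply: sum_sub_le.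
by apply: sum_sub_le => // i; apply: sumr_ge0.
Qed.

Lemma dsum_D1 a (A : {set 'I_N}) j : j \in A ->
  dsum a A = dsum a (A :\ j) + (\sum_(i in A) a j i + \sum_(i in A :\ j) a i j).
Proof.
move=> jA; rewrite /dsum (big_setD1 j jA) /=.
rewrite [X in _ + X = _](eq_bigr (fun i => a i j + \sum_(k in A :\ j) a i k)); last first.
  by move=> i _; rewrite (big_setD1 j jA).
rewrite big_split /=; ring.
Qed.
End Help.

Theorem mainTheorem6 (R : rcfType) (K N : nat)
  (g : 'I_N -> 'I_K -> R[i]) (w : 'I_N -> R)
  (hg : forall i, g i <> (fun _ => 0))
  (hw : forall i, 0 <= w i) :
  [/\ WFC g w set0 = 0,
      (forall S1 S2 : {set 'I_N}, S1 \subset S2 -> WFC g w S1 <= WFC g w S2)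
    & (forall (S1 S2 : {set 'I_N}) (j : 'I_N), S1 \subset S2 -> j \notin S2 ->
         WFC g w (j |: S2) - WFC g w S2 <= WFC g w (j |: S1) - WFC g w S1)].
Proof.
set a := fun i j => w i * w j * (Normc.normc (cinner (g i) (g j)) ^+ 2 / (cnorm2 (g i) * cnorm2 (g j))).
have a0 : forall i k, 0 <= a i k.
  move=> i k; rewrite /a; apply: mulr_ge0; first by apply: mulr_ge0.
  apply: divr_ge0; first by apply: sqr_ge0.
  by apply: mulr_ge0; apply: sumr_ge0 => ? _; apply: sqr_ge0.
have E : forall T, WFC g w T = dsum a setT - dsum a (~: T) by [].
split.
- by rewrite E setC0 subrr.
- move=> S1 S2 S12; by rewrite !E lerB // dsum_mono // setCS.
- move=> S1 S2 j S12 jS2.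
  have jS1 : j \notin S1 by apply: contra jS2; apply: (subsetP S12).
  have D : forall S : {set 'I_N}, j \notin S -> WFC g w (j |: S) - WFC g w S =
      \sum_(i in ~: S) a j i + \sum_(i in ~: S :\ j) a i j.
    move=> S jS; rewrite !E (dsum_D1 a (A:=~: S) (j:=j)) ?inE //.
    have -> : ~: (j |: S) = ~: S :\ j by rewrite setCU setDE setIC.
    ring.
  rewrite !D //; apply: lerD; apply: sum_sub_le => //.
    by rewrite setCS.
  by apply: setSD; rewrite setCS.
Qed.
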